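(* Let $K^G, K^F, T \ge 1$ be integers and $p = K^G + T K^F$. Let $\boldsymbol{\Sigma}$ be a $p \times p$ symmetric positive definite matrix partitioned into blocks (rows and columns indexed first by a $G$-block of size $K^G$ and then by $K^F$ consecutive $F$-blocks $F_1,\dots,F_{K^F}$, each of size $T$) of the form $$\boldsymbol{\Sigma}=\begin{bmatrix} \boldsymbol{\Sigma}_{GG} & \boldsymbol{\Sigma}_{GF_1} & \cdots & \boldsymbol{\Sigma}_{GF_{K^F}} \\ \boldsymbol{\Sigma}_{GF_1}^\intercal & \boldsymbol{\Sigma}_{F_1F_1} & & \boldsymbol{0} \\ \vdots & & \ddots & \\ \boldsymbol{\Sigma}_{GF_{K^F}}^\intercal & \boldsymbol{0} & & \boldsymbol{\Sigma}_{F_{K^F}F_{K^F}} \end{bmatrix},$$ where $\boldsymbol{\Sigma}_{GG}$ is a $K^G\times K^G$ diagonal matrix, each $\boldsymbol{\Sigma}_{F_kF_k}$ is $T\times T$, each $\boldsymbol{\Sigma}_{GF_k}$ is $K^G \times T$, and all blocks between $F_k$ and $F_l$ with $k\neq l$ are zero. For $k_1,k_2\in\{1,\dots,K^F\}$ write $k_1\sim k_2$ if and only if there exists $g\in\{1,\dots,K^G\}$ such that the $g$-th row of $\boldsymbol{\Sigma}_{GF_{k_1}}$ and the $g$-th row of $\boldsymbol{\Sigma}_{GF_{k_2}}$ are both nonzero vectors, and assume that $\sim$ is a partial equivalence relation (i.e., it is transitive; it is symmetric by definition). Let $\boldsymbol{\Sigma}^{-1}=\mathbf{L}^\intercal\mathbf{D}^{-1}\mathbf{L}$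 be the (unique) decomposition with $\mathbf{L}$ lower triangular with unit diagonal and $\mathbf{D}$ diagonal with positive entries, and set $\boldsymbol{\zeta}=\mathbf{I}-\mathbf{L}$ with entries $\zeta_{ji}$. Then for all $k_1<k_2$ in $\{1,\dots,K^F\}$ with $k_1\nsim k_2$, we have $\zeta_{ji}=0$ for all $i\in\{K^G+(k_1-1)T+1,\dots,K^G+k_1T\}$ and all $j\in\{K^G+(k_2-1)T+1,\dots,K^G+k_2T\}$.
   Context: Equivalently, if $(\gamma_1,\dots,\gamma_p)$ is a mean-zero random vector with covariance $\boldsymbol{\Sigma}$, then for $j>1$, $(\zeta_{j1},\dots,\zeta_{j,j-1})$ are the coefficients of the best linear predictor of $\gamma_j$ from $\gamma_1,\dots,\gamma_{j-1}$ (with $\zeta_{jk}=0$ for $k\ge j$), and $\mathbf{D}$ is the diagonal matrix of the corresponding residual variances. In the paper, $\boldsymbol{\Sigma}=\boldsymbol{\Sigma}_{\boldsymbol{\gamma}}+\sigma_\epsilon^2\mathbf{I}_p$ is the covariance of combined random effects and errors for geometric principal component projections (the $G$-block) and time series of length $T$ of projections on $K^F$ functional principal components (the $F$-blocks). *)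

(* Defs.v *)
From mathcomp Require Import all_boot all_order all_algebra.
Set Implicit Arguments. Unset Strict Implicit. Unset Printing Implicit Defensive.
Import Order.TTheory GRing.Theory Num.Theory.
Local Open Scope ring_scope.

(* Indices of a p x p matrix with p = KG + KF * T:
   G-block index g (0-based) is position g;
   F-block k (0-based), within-block time t (0-based) is position KG + k*T + t. *)
Definition gidx (KG KF T : nat) (g : 'I_KG) : 'I_(KG + KF * T) :=
  lshift (KF * T) g.
Definition fidx (KG KF T : nat) (k : 'I_KF) (t : 'I_T) : 'I_(KG + KF * T) :=
  rshift KG (mxvec_index k t).

Definition simF (R : pzRingType) (KG KF T : nat) (S : 'M[R]_(KG + KF * T))
  (k1 k2 : 'I_KF) : Prop :=
  exists g : 'I_KG,
    (exists t : 'I_T, S (gidx KF T g) (fidx KG k1 t) != 0) /\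
    (exists t : 'I_T, S (gidx KF T g) (fidx KG k2 t) != 0).

(* Main.v *)
Require Import Defs.
From mathcomp Require Import all_boot all_order all_algebra.
From mathcomp Require Import zify.
Import Order.TTheory GRing.Theory Num.Theory.
Local Open Scope ring_scope.

Lemma lowW (R : realFieldType) n (A W : 'M[R]_n) : is_trig_mx A ->
  (forall i, A i i = 1) -> A^T *m W = 1%:M ->
  forall a b : 'I_n, (b < a)%N -> W a b = 0.
Proof.
move=> /is_trig_mxP Atr Ad AW.
suff H: forall k (a b : 'I_n), (n - a <= k)%N -> (b < a)%N -> W a b = 0.
  by move=> a b; apply: H.
elim=> [|k IH] a b.
  by rewrite leqn0 subn_eq0 => /(leq_trans (ltn_ord a)); rewrite ltnn.
move=> hk hba; have := congr1 (fun M : 'M[R]_n => M a b) AW.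
have ne : (a == b) = false by apply/negbTE; rewrite -val_eqE /= gtn_eqF.
rewrite [in RHS]mxE ne mulr0n mxE (bigD1 a) //= mxE Ad mul1r big1 ?addr0 //.
move=> m hm; rewrite mxE; case: (ltngtP m a) => h.
- by rewrite Atr // mul0r.
- by rewrite (IH m b) ?mulr0 //; [lia | apply: ltn_trans h].
- by move: hm; rewrite (val_inj h) eqxx.
Qed.

Lemma sepL (R : realFieldType) n (S L : 'M[R]_n) (inX : pred 'I_n) :
  (forall v : 'cV[R]_n, v != 0 -> 0 < (v^T *m S *m v) 0 0) ->
  is_trig_mx L ->
  (forall a b : 'I_n, (b < a)%N -> (L *m S) a b = 0) ->
  (forall a b, inX a -> ~~ inX b -> S b a = 0) ->
  forall j i, ~~ inX j -> inX i -> L j i = 0.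
Proof.
move=> pd /is_trig_mxP Ltr hLS sep j i hj hi.
pose x := \col_m (if inX m && (m < j)%N then L j m else 0) : 'cV[R]_n.
suff x0 : x = 0.
  case: (ltngtP i j) => h.
  - by have := congr1 (fun M : 'cV[R]_n => M i 0) x0; rewrite !mxE hi h.
  - by rewrite Ltr.
  - by move: hj; rewrite -(val_inj h) hi.
apply/eqP; apply: contraT => nz; have := pd x nz.
suff ->: (x^T *m S *m x) 0 0 = 0 by rewrite ltxx.
rewrite mxE; apply: big1 => b _; rewrite [x b 0]mxE.
case: ifP => hb; last by rewrite mulr0.
move/andP: hb => [hbX hbj].
suff ->: (x^T *m S) 0 b = (L *m S) j b by rewrite hLS // mul0r.
rewrite !mxE; apply: eq_bigr => a _; rewrite !mxE.
case: ifP => ha //.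
case hXa: (inX a).
- move: ha; rewrite hXa /= => /negbT; rewrite -leqNgt leq_eqVlt => /orP[/eqP e|lt].
  + by move: hj; rewrite (val_inj e) hXa.
  + by rewrite Ltr // mul0r.
- by rewrite (sep b a) ?hXa // !mulr0.
Qed.

Arguments lowW {R n A W}.
Arguments sepL {R n S L inX}.

Lemma mxvec_index_inj m n (i i' : 'I_m) (j j' : 'I_n) :
  mxvec_index i j = mxvec_index i' j' -> i = i' /\ j = j'.
Proof.
by rewrite /mxvec_index => /cast_ord_inj /enum_rank_inj [-> ->].
Qed.

Theorem proposition1 (R : realFieldType) (KG KF T : nat)
  (S : 'M[R]_(KG + KF * T)) :
  (0 < KG)%N -> (0 < KF)%N -> (0 < T)%N ->
  (* symmetric positive definite *)
  S^T = S ->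
  (forall v : 'cV[R]_(KG + KF * T), v != 0 -> 0 < (v^T *m S *m v) 0 0) ->
  (* Sigma_GG diagonal *)
  (forall g1 g2 : 'I_KG, g1 != g2 -> S (gidx KF T g1) (gidx KF T g2) = 0) ->
  (* blocks between F_k and F_l, k <> l, vanish *)
  (forall (k1 k2 : 'I_KF) (t1 t2 : 'I_T), k1 != k2 ->
      S (fidx KG k1 t1) (fidx KG k2 t2) = 0) ->
  (* ~ is transitive *)
  (forall k1 k2 k3 : 'I_KF, simF S k1 k2 -> simF S k2 k3 -> simF S k1 k3) ->
  forall (L D : 'M[R]_(KG + KF * T)),
    is_trig_mx L -> (forall i, L i i = 1) ->
    is_diag_mx D -> (forall i, 0 < D i i) ->
    invmx S = L^T *m invmx D *m L ->
    forall k1 k2 : 'I_KF, (k1 < k2)%N -> ~ simF S k1 k2 ->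
      forall t1 t2 : 'I_T, (1%:M - L) (fidx KG k2 t2) (fidx KG k1 t1) = 0.
Proof.
move=> _ _ _ hsym pd hGG hFF htr L D Ltr Ld Ddiag Dpos hinv k1 k2 hk12 nsim t1 t2.
have Ssym a b : S a b = S b a by rewrite -{1}hsym mxE.
have simFsym a b : simF S a b -> simF S b a.
  by move=> [g [h1 h2]]; exists g; split.
pose simFb a b := [exists g, [exists t, S (gidx KF T g) (fidx KG a t) != 0]
   && [exists t, S (gidx KF T g) (fidx KG b t) != 0]].
have simFP a b : reflect (simF S a b) (simFb a b).
  apply: (iffP existsP) => [[g /andP[/existsP h1 /existsP h2]]|[g [[t h1] [t' h2]]]].
    by exists g.
  by exists g; apply/andP; split; apply/existsP; [exists t | exists t'].
have Su : S \in unitmx.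
  rewrite unitmxE unitfE; apply/negP => /det0P [v nz vS].
  have := pd v^T; rewrite trmx_eq0 => /(_ nz); rewrite trmxK vS mul0mx mxE ltxx.
  by [].
have Du : D \in unitmx.
  rewrite unitmxE unitfE det_trig ?is_diag_mx_is_trig //.
  by apply/lt0r_neq0/prodr_gt0 => i _; apply: Dpos.
have hW : L^T *m (invmx D *m (L *m S)) = 1%:M.
  by rewrite !mulmxA -hinv mulVmx.
have hLS : forall a b : 'I_(KG + KF * T), (b < a)%N -> (L *m S) a b = 0.
  move=> a b hab.
  have -> : L *m S = D *m (invmx D *m (L *m S)) by rewrite mulmxA mulmxV // mul1mx.
  rewrite mxE (bigD1 a) //= big1 ?addr0.
    by rewrite (lowW Ltr Ld hW _ _ hab) mulr0.
  move=> m hm; move/is_diag_mxP: Ddiag => ->; first by rewrite mul0r.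
  by rewrite eq_sym.
pose cl k := (k == k1) || simFb k k1.
pose inG g := [exists k, cl k && [exists t, S (gidx KF T g) (fidx KG k t) != 0]].
pose inX (m : 'I_(KG + KF * T)) :=
  [exists g, (m == gidx KF T g) && inG g] ||
  [exists k, [exists t, (m == fidx KG k t) && cl k]].
have inXg g : inX (gidx KF T g) = inG g.
  rewrite /inX /gidx /fidx; apply/idP/idP.
    case/orP => [/existsP[g' /andP[/eqP/lshift_inj -> //]]|].
    by move=> /existsP[k /existsP[t /andP[]]]; rewrite eq_lrshift.
  by move=> h; apply/orP; left; apply/existsP; exists g; rewrite eqxx h.
have inXf k t : inX (fidx KG k t) = cl k.
  rewrite /inX /gidx /fidx; apply/idP/idP.
    case/orP => [/existsP[g' /andP[]]|]; first by rewrite eq_rlshift.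
    move=> /existsP[k' /existsP[t' /andP[/eqP/rshift_inj/mxvec_index_inj [-> _] //]]].
  by move=> h; apply/orP; right; apply/existsP; exists k; apply/existsP; exists t;
    rewrite eqxx h.
have idx_case (m : 'I_(KG + KF * T)) :
    (exists g, m = gidx KF T g) \/ (exists k t, m = fidx KG k t).
  case: (split_ordP m) => [g -> | r ->]; first by left; exists g.
  by right; case/mxvec_indexP: r => k t; exists k, t.
have sep a b : inX a -> ~~ inX b -> S b a = 0.
  case: (idx_case a) => [[g ->]|[k [t ->]]]; case: (idx_case b) => [[g' ->]|[k' [t' ->]]];
    rewrite ?inXg ?inXf => ha hb.
  - apply: hGG; apply: contraNneq hb => ->; exact: ha.
  - rewrite Ssym; apply/eqP; apply: contraNT hb => nz.
    move/existsP: ha => [k'' /andP[hcl /existsP[t'' nz'']]].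
    have hs : simF S k' k'' by exists g; split; [exists t' | exists t''].
    rewrite /cl; apply/orP; right; apply/simFP.
    case/orP: hcl => [/eqP <- //|/simFP h]; exact: htr hs h.
  - apply/eqP; apply: contraNT hb => nz; apply/existsP; exists k; rewrite ha /=.
    by apply/existsP; exists t.
  - apply: hFF; apply: contraNneq hb => ->; exact: ha.
have hj : ~~ inX (fidx KG k2 t2).
  rewrite inXf /cl negb_or; apply/andP; split.
    by apply: contraTneq hk12 => ->; rewrite ltnn.
  by apply/negP => /simFP /simFsym.
have hi : inX (fidx KG k1 t1) by rewrite inXf /cl eqxx.
rewrite !mxE (sepL pd Ltr hLS sep _ _ hj hi) subr0.
have -> : (fidx KG k2 t2 == fidx KG k1 t1) = false.
  by apply/negP => /eqP e; move: hj; rewrite e hi.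
by [].
Qed.
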